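(* Assume the setting below. Let $j\in\mathbb{N}$ and let $w\in F_j$ with $\mathrm{len}(w)>(1,0)$. Then \[|Z_j(w)|\le \mathrm{len}_B(w)\,m_j\,(|Y_j|+|Y_j'|).\]
   Context: Setting: $Q,G$ are groups and $X=(X_n)_{n\in\mathbb{N}}$ is a sequence of finite sets with $|X_n|\ge2$, each with actions of $Q$ and $G$; $Q_n,G_n\subseteq\mathrm{Sym}(X_n)$ are the images and $A_n=\langle Q_n,G_n\rangle$. Assume for all $n$: (A1) $G,Q$ finitely generated; (A2) $Q$ perfect; (A3) $A_n$ is transitive on $X_n$ and generated by the $G_n$-conjugates of $Q_n$. $\mathcal{T}_j$ is the rooted tree of finite words $x_j\cdots x_k$ ($x_i\in X_i$), $\mathrm{Aut}(\mathcal{T}_j)$ its root-fixing automorphisms; sections $h|_u\in\mathrm{Aut}(\mathcal{T}_{j+\ell})$ (for $u$ of level $\ell$) are defined by $h(uv)=h(u)h|_u(v)$. $A_j$ acts by rooted automorphisms $a\cdot x_jx_{j+1}\cdots x_k=(ax_j)x_{j+1}\cdots x_k$ and is identified with its image; $q_j,g_j$ denote images of $q\in Q,g\in G$ in $A_j$. A point $o\in X_i$ is fixed in each $X_i$; $\mathcal{S}=\prod_{i\ge1}(X_i\setminus\{o\})$. For $\alpha\in\mathcal{S}$, $q\in Q$, $\tilde q^\alpha_{[j]}\in\mathrm{Aut}(\mathcal{T}_j)$ acts trivially on the first level with section at $x\in X_j$ equal to $\tilde q^\alpha_{[j+1]}$ if $x=o$, $q_{j+1}$ if $x=\alpha_j$,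 identity otherwise; analogously $\tilde g^\beta_{[j]}$ for $\beta\in\mathcal{S}$, $g\in G$. Let $\Gamma_j^{\alpha,\beta}=\langle A_j,\tilde q^\alpha_{[j]},\tilde g^\beta_{[j]}: q\in Q,g\in G\rangle$. For every $i$, $Y_i,Y_i'\subseteq X_i\setminus\{o\}$ are non-empty disjoint subsets, $\mathcal{Y}=\prod_iY_i$, $\mathcal{Y}'=\prod_iY_i'$, and $m_j$ is the maximal order of an element of $A_j$. For $(\alpha,\beta)\in\mathcal{Y}\times\mathcal{Y}'$ we have $\alpha_i\neq\beta_i$ for all $i$, so the elements $\tilde q^\alpha_{[j]}$ and $\tilde g^\beta_{[j]}$ commute and there is a homomorphism $f_j^{\alpha,\beta}$ from the free product $F_j=A_j*B$, $B=Q\times G$, onto $\Gamma_j^{\alpha,\beta}$, sending $a\in A_j$ to $a$, $q\in Q$ to $\tilde q^\alpha_{[j]}$ and $g\in G$ to $\tilde g^\beta_{[j]}$. Lengths: each $w\in F_j$ has a unique normal form alternating between non-trivial letters from $A_j$ and from $B$; $\mathrm{len}_B(w)$ and $\mathrm{len}_A(w)$ are the numbers of $B$-letters and $A_j$-letters, and $\mathrm{len}(w)=(\mathrm{len}_B(w),\mathrm{len}_A(w))$, with $\mathbb{Z}\times\mathbb{Z}$ ordered lexicographically ($(b,a)>(b',a')$ iff $b>b'$, or $b=b'$ and $a>a'$). For $\gamma\in\Gamma_j^{\alpha,\beta}$, $\mathrm{len}(\gamma)=(\mathrm{len}_B(\gamma),\mathrm{len}_A(\gamma))$ is the minimum of $\mathrm{len}(w)$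 over $w\in F_j$ with $f_j^{\alpha,\beta}(w)=\gamma$ (for elements of $\Gamma_{j+1}^{\alpha,\beta}$ this is taken with respect to $F_{j+1}$ and $f_{j+1}^{\alpha,\beta}$). Stabilized sections: for $h\in\mathrm{Aut}(\mathcal{T}_j)$ and a vertex $u$, $\ell_u(h)$ is the length of the orbit of $u$ under $\langle h\rangle$ and $h\Vert_u=h^{\ell_u(h)}|_u$; for $x\in X_j$ and $\gamma\in\Gamma_j^{\alpha,\beta}$, $\gamma\Vert_x\in\Gamma_{j+1}^{\alpha,\beta}$. The set $Z_j(w)\subseteq Y_j\times Y_j'$: if $\mathrm{len}_B(w)>1$, it consists of the pairs $(s,t)$ for which there exist a vertex $x\in X_j$ and $(\alpha,\beta)\in\mathcal{Y}\times\mathcal{Y}'$ with $\alpha_j=s$, $\beta_j=t$ and $\mathrm{len}_B(f_j^{\alpha,\beta}(w)\Vert_x)=\mathrm{len}_B(w)$; if $\mathrm{len}_B(w)=1$, it consists of the pairs $(s,t)$ for which there exist $x\in X_j$ and $(\alpha,\beta)\in\mathcal{Y}\times\mathcal{Y}'$ with $\alpha_j=s$, $\beta_j=t$ and $\mathrm{len}(f_j^{\alpha,\beta}(w)\Vert_x)>(1,0)$. *)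

(* Defs.v *)
From HB Require Import structures.
From mathcomp Require Import all_boot all_order all_fingroup.
From mathcomp Require Import boolp.
Set Implicit Arguments. Unset Strict Implicit. Unset Printing Implicit Defensive.

Section AbstractGroups.
Local Open Scope group_scope.
Variable Γ : groupType.

Inductive gen_by (S : Γ -> Prop) : Γ -> Prop :=
| gen_base x : S x -> gen_by S x
| gen_one : gen_by S 1
| gen_mul x y : gen_by S x -> gen_by S y -> gen_by S (x * y)
| gen_inv x : gen_by S x -> gen_by S x^-1.

Definition fin_generated : Prop := exists s : seq Γ, forall x, gen_by (fun y => y \in s) x.
Definition perfect_group : Prop :=
  forall x, gen_by (fun c => exists a b : Γ, c = a^-1 * b^-1 * a * b) x.
End AbstractGroups.

Section Trees.
Variable X : nat -> finType.

(* a finite word x_j x_{j+1} ... x_k with x_i in X_i, i.e. a vertex of T_j *)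
Inductive word : nat -> Type :=
| wnil j : word j
| wcons j (x : X j) (v : word j.+1) : word j.
Arguments wnil : clear implicits.

Definition wtail j (w : word j) : word j.+1 :=
  match w in word k return word k.+1 with
  | wnil k => wnil k.+1
  | wcons _ _ v => v
  end.

Definition whead j (d : X j) (w : word j) : X j :=
  match w in word k return X k -> X k with
  | wnil _ => fun d => d
  | wcons _ x _ => fun _ => x
  end d.

Definition permact j (a : {perm X j}) (w : word j) : word j :=
  match w in word k return (X k -> X k) -> word k with
  | wnil k => fun _ => wnil k
  | wcons _ x v => fun f => wcons (f x) v
  end (fun x => a x).

Definition lvl1 j (h : word j -> word j) (x : X j) : X j := whead x (h (wcons x (wnil j.+1))).

(* section of h at a first-level vertex x: h(x v) = h(x) h|_x(v) *)
Definition section j (h : word j -> word j) (x : X j) : word j.+1 -> word j.+1 :=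
  fun v => wtail (h (wcons x v)).

(* stabilized section h||_x = h^{l_x(h)}|_x, l_x(h) = length of the <h>-orbit of x *)
Definition stab_section j (h : word j -> word j) (x : X j) : word j.+1 -> word j.+1 :=
  section (iter (fingraph.order (lvl1 h) x) h) x.

End Trees.
Arguments wnil {X} j.
Arguments wcons {X j} x v.

Section Setting.
Variable X : nat -> finType.
Variable o : forall n, X n.
Variables Q G : groupType.
Variable rQ : forall n, Q -> {perm X n}.
Variable rG : forall n, G -> {perm X n}.

Definition Qimg n : {set {perm X n}} := [set s | `[< exists q, rQ n q = s >]].
Definition Gimg n : {set {perm X n}} := [set s | `[< exists g, rG n g = s >]].
Definition Agrp n : {set {perm X n}} := <<Qimg n :|: Gimg n>>%g.

Definition mA n : nat := \max_(a in Agrp n) #[a]%g.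

Fixpoint tq (alpha : forall i, X i) (q : Q) j (w : word X j) {struct w} : word X j :=
  match w in word _ k return word X k with
  | wnil k => wnil k
  | wcons k x v =>
      if x == o k then wcons x (tq alpha q v)
      else if x == alpha k then wcons x (permact (rQ k.+1 q) v)
      else wcons x v
  end.

Fixpoint tg (beta : forall i, X i) (g : G) j (w : word X j) {struct w} : word X j :=
  match w in word _ k return word X k with
  | wnil k => wnil k
  | wcons k x v =>
      if x == o k then wcons x (tg beta g v)
      else if x == beta k then wcons x (permact (rG k.+1 g) v)
      else wcons x v
  end.

(* letters of the free product F_j = A_j * B, B = Q x G *)
Definition letter j : Type := ({perm X j} + (Q * G))%type.

(* w is a reduced word (normal form) of F_j: non-trivial letters alternating between A_j and B *)
Definition good_letter j (l : letter j) : Prop :=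
  match l with
  | inl a => a \in Agrp j /\ a <> 1%g
  | inr b => b <> (1%g, 1%g)
  end.

Fixpoint alternating j (w : seq (letter j)) : Prop :=
  match w with
  | [::] => True
  | l :: w' =>
      match w' with
      | [::] => True
      | l' :: _ => is_inl l <> is_inl l' /\ alternating w'
      end
  end.

Definition reduced j (w : seq (letter j)) : Prop :=
  (forall l, l \in w -> good_letter l) /\ alternating w.

(* the homomorphism f_j^{alpha,beta} : F_j -> Gamma_j^{alpha,beta} evaluated on normal forms
   (automorphisms are functions on vertices, composed as (h h')(v) = h (h' v)) *)
Definition eval_letter (alpha beta : forall i, X i) j (l : letter j) : word X j -> word X j :=
  match l with
  | inl a => permact a
  | inr (q, g) => fun v => tq alpha q (tg beta g v)
  end.

Definition f_eval (alpha beta : forall i, X i) j (w : seq (letter j)) : word X j -> word X j :=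
  foldr (fun l h => fun v => eval_letter alpha beta l (h v)) id w.

Definition lenB j (w : seq (letter j)) : nat := count (fun l => ~~ is_inl l) w.
Definition lenA j (w : seq (letter j)) : nat := count (fun l => is_inl l) w.
Definition len j (w : seq (letter j)) : nat * nat := (lenB w, lenA w).

Definition lex_lt (p p' : nat * nat) : Prop :=
  (p.1 < p'.1)%N \/ (p.1 = p'.1 /\ (p.2 < p'.2)%N).
Definition lex_le (p p' : nat * nat) : Prop := p = p' \/ lex_lt p p'.

Definition has_len (alpha beta : forall i, X i) j (gamma : word X j -> word X j) (p : nat * nat)
  : Prop :=
  (exists w, reduced w /\ f_eval alpha beta w =1 gamma /\ len w = p) /\
  (forall w, reduced w -> f_eval alpha beta w =1 gamma -> lex_le p (len w)).

Variables Y Y' : forall i, {set X i}.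

Definition in_prod (S : forall i, {set X i}) (alpha : forall i, X i) : Prop :=
  forall i, alpha i \in S i.

Definition Zcond (alpha beta : forall i, X i) j (w : seq (letter j)) (x : X j) : Prop :=
  let gx := stab_section (f_eval alpha beta w) x in
  if (1 < lenB w)%N then exists p, has_len alpha beta gx p /\ p.1 = lenB w
  else if lenB w == 1%N then exists p, has_len alpha beta gx p /\ lex_lt (1%N, 0%N) p
  else False.

Definition Zset j (w : seq (letter j)) : {set X j * X j} :=
  [set st | (st.1 \in Y j) && (st.2 \in Y' j) &&
     `[< exists (x : X j) (alpha beta : forall i, X i),
           [/\ in_prod Y alpha, in_prod Y' beta, alpha j = st.1, beta j = st.2
             & Zcond alpha beta w x] >]].

End Setting.

(* Main.v *)
Require Import Defs.
From HB Require Import structures.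
From mathcomp Require Import all_boot all_order all_fingroup.
From mathcomp Require Import boolp.
From mathcomp Require Import zify.
Set Implicit Arguments. Unset Strict Implicit. Unset Printing Implicit Defensive.


Section Basics.
Variable X : nat -> finType.
Variable o : forall n, X n.
Variables Q G : groupType.
Variable rQ : forall n, Q -> {perm X n}.
Variable rG : forall n, G -> {perm X n}.
Variables alpha beta : forall i, X i.

Local Notation fe := (f_eval o rQ rG alpha beta).
Local Notation L j := (letter X Q G j).

Lemma fe_cat j (u u' : seq (L j)) v : fe (u ++ u') v = fe u (fe u' v).
Proof. by elim: u => //= l u IH; rewrite IH. Qed.

Definition letperm j (l : L j) : {perm X j} := if l is inl a then a else 1%g.
Fixpoint sig j (w : seq (L j)) : {perm X j} :=
  if w is l :: w' then (sig w' * letperm l)%g else 1%g.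
Definition sec_letter j (l : L j) (y : X j) : seq (L j.+1) :=
  match l with
  | inl _ => [::]
  | inr (q, g) => if y == o j then [:: inr (q, g)]
       else (if y == alpha j then [:: inl (rQ j.+1 q)] else [::]) ++
            (if y == beta j then [:: inl (rG j.+1 g)] else [::])
  end.
Fixpoint sec j (w : seq (L j)) (y : X j) : seq (L j.+1) :=
  if w is l :: w' then sec_letter l (sig w' y) ++ sec w' y else [::].

Lemma eval_letter_wcons j (l : L j) y v :
  eval_letter o rQ rG alpha beta l (wcons y v) = wcons (letperm l y) (fe (sec_letter l y) v).
Proof.
case: l => [a|[q g]] //=.
rewrite perm1; case: eqP => [->|/eqP hyo] /=; first by rewrite eqxx.
by case hb: (y == beta j); case ha: (y == alpha j) => /=; rewrite ?(negbTE hyo) /= ?ha ?hb.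
Qed.

Lemma fe_wcons j (w : seq (L j)) y v :
  fe w (wcons y v) = wcons (sig w y) (fe (sec w y) v).
Proof.
elim: w => [|l w IH] /=; first by rewrite perm1.
by rewrite IH eval_letter_wcons fe_cat permM.
Qed.

Lemma fe_wnil j (w : seq (L j)) : fe w (wnil j) = wnil j.
Proof. by elim: w => //= l w ->; case: l => [a|[q g]]. Qed.

Lemma lvl1_fe j (w : seq (L j)) : lvl1 (fe w) = sig w.
Proof. by apply: funext => x; rewrite /lvl1 fe_wcons. Qed.

Fixpoint secit j (w : seq (L j)) k (y : X j) : seq (L j.+1) :=
  if k is k'.+1 then sec w (iter k' (sig w) y) ++ secit w k' y else [::].

Lemma iter_fe j (w : seq (L j)) k y v :
  iter k (fe w) (wcons y v) = wcons (iter k (sig w) y) (fe (secit w k y) v).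
Proof. by elim: k => //= k ->; rewrite fe_wcons fe_cat. Qed.

Lemma stab_fe j (w : seq (L j)) x :
  stab_section (fe w) x =1 fe (secit w (fingraph.order (sig w) x) x).
Proof. by move=> v; rewrite /stab_section /section lvl1_fe iter_fe. Qed.

End Basics.



Section Norm.
Variable X : nat -> finType.
Variable o : forall n, X n.
Variables Q G : groupType.
Variable rQ : forall n, Q -> {perm X n}.
Variable rG : forall n, G -> {perm X n}.
Hypothesis hrQ : forall n (q q' : Q) (x : X n), rQ n (q * q')%g x = rQ n q (rQ n q' x).
Hypothesis hrG : forall n (g g' : G) (x : X n), rG n (g * g')%g x = rG n g (rG n g' x).
Variables alpha beta : forall i, X i.
Hypothesis hab : forall i, alpha i != beta i.

Local Notation fe := (f_eval o rQ rG alpha beta).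
Local Notation L j := (letter X Q G j).

Lemma permact_mul j (a b : {perm X j}) v : permact a (permact b v) = permact (b * a)%g v.
Proof. by case: v a b => //= k x v a b; rewrite permM. Qed.
Lemma permact1 j v : permact (1%g : {perm X j}) v = v.
Proof. by case: v => //= k x v; rewrite perm1. Qed.

Lemma rQ1 n (x : X n) : rQ n 1%g x = x.
Proof. by apply: (@perm_inj _ (rQ n 1%g)); rewrite -hrQ mulg1. Qed.
Lemma rG1 n (x : X n) : rG n 1%g x = x.
Proof. by apply: (@perm_inj _ (rG n 1%g)); rewrite -hrG mulg1. Qed.

Lemma tq_mul q q' j (v : word X j) : tq o rQ alpha (q * q')%g v = tq o rQ alpha q (tq o rQ alpha q' v).
Proof.
elim: v => // k x v IH /=.
case hxo: (x == o k) => /=; rewrite ?hxo ?IH //.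
case hxa: (x == alpha k) => /=; rewrite ?hxo ?hxa //.
by rewrite permact_mul; congr (wcons x (permact _ v)); apply/permP => y; rewrite permM hrQ.
Qed.
Lemma tg_mul g g' j (v : word X j) : tg o rG beta (g * g')%g v = tg o rG beta g (tg o rG beta g' v).
Proof.
elim: v => // k x v IH /=.
case hxo: (x == o k) => /=; rewrite ?hxo ?IH //.
case hxa: (x == beta k) => /=; rewrite ?hxo ?hxa //.
by rewrite permact_mul; congr (wcons x (permact _ v)); apply/permP => y; rewrite permM hrG.
Qed.
Lemma tq1 j (v : word X j) : tq o rQ alpha 1%g v = v.
Proof.
elim: v => // k x v IH /=.
case hxo: (x == o k) => /=; rewrite ?IH //.
case hxa: (x == alpha k) => //=.
by rewrite -(permact1 v); rewrite permact_mul mul1g; congr (wcons x (permact _ _)); apply/permP => y; rewrite perm1 rQ1.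
Qed.
Lemma tg1 j (v : word X j) : tg o rG beta 1%g v = v.
Proof.
elim: v => // k x v IH /=.
case hxo: (x == o k) => /=; rewrite ?IH //.
case hxa: (x == beta k) => //=.
by rewrite -(permact1 v); rewrite permact_mul mul1g; congr (wcons x (permact _ _)); apply/permP => y; rewrite perm1 rG1.
Qed.
Lemma tqg_comm q g j (v : word X j) :
  tq o rQ alpha q (tg o rG beta g v) = tg o rG beta g (tq o rQ alpha q v).
Proof.
elim: v => // k x v IH /=.
case hxo: (x == o k) => /=; rewrite ?hxo ?IH //.
case hxb: (x == beta k); case hxa: (x == alpha k) => /=; rewrite ?hxo ?hxa ?hxb //.
by move: (hab k); rewrite -(eqP hxa) -(eqP hxb) eqxx.
Qed.

Definition push j (l : L j) (r : seq (L j)) : seq (L j) :=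
  match l with
  | inl a => match r with
             | inl b :: r' => if (b * a)%g == 1%g then r' else inl (b * a)%g :: r'
             | _ => if a == 1%g then r else inl a :: r
             end
  | inr (q, g) => match r with
             | inr (q', g') :: r' => if ((q * q')%g, (g * g')%g) == (1%g, 1%g) then r'
                                     else inr ((q * q')%g, (g * g')%g) :: r'
             | _ => if (q, g) == (1%g, 1%g) then r else inr (q, g) :: r
             end
  end.

Definition norm j (u : seq (L j)) := foldr (@push j) [::] u.

Lemma push_eval j (l : L j) r v : fe (push l r) v = fe (l :: r) v.
Proof.
case: l => [a|[q g]].
  case: r => [|[b|bb] r] /=.
  - by case: eqP => [->|] //=; rewrite permact1.
  - by rewrite permact_mul; case: eqP => [->|] //=; rewrite permact1.
  - by case: eqP => [->|] //=; rewrite permact1.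
case: r => [|[b|[q' g']] r] /=.
- by case: eqP => [[-> ->]|] //=; rewrite tg1 tq1.
- by case: eqP => [[-> ->]|] //=; rewrite tg1 tq1.
- by rewrite -(tqg_comm q' g) -tg_mul -tq_mul; case: eqP => [[-> ->]|] //=; rewrite tg1 tq1.
Qed.

Lemma norm_eval j (u : seq (L j)) v : fe (norm u) v = fe u v.
Proof. by elim: u v => //= l u IH v; rewrite push_eval /= IH. Qed.

End Norm.



Section Red.
Variable X : nat -> finType.
Variables Q G : groupType.
Variable rQ : forall n, Q -> {perm X n}.
Variable rG : forall n, G -> {perm X n}.
Local Notation L j := (letter X Q G j).

Definition hd_ok j (l : L j) (r : seq (L j)) : Prop :=
  if r is l' :: _ then is_inl l <> is_inl l' else True.

Lemma reduced_consP j (l : L j) r :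
  reduced rQ rG (l :: r) <-> [/\ good_letter rQ rG l, reduced rQ rG r & hd_ok l r].
Proof.
rewrite /reduced; split.
  case=> hg halt; split.
  - by apply: hg; rewrite mem_head.
  - split; first by move=> l' hl'; apply: hg; rewrite in_cons hl' orbT.
    by case: r halt {hg} => //= l' r [].
  - by case: r halt {hg} => //= l' r [].
case=> hl [hg halt] hh; split.
  by move=> l'; rewrite in_cons => /orP[/eqP->|]; [|apply: hg].
by case: r hh halt {hg} => //= l' r.
Qed.

Lemma reduced_nil j : reduced rQ rG ([::] : seq (L j)).
Proof. by split. Qed.

Definition agood j (l : L j) : bool := if l is inl a then a \in Agrp rQ rG j else true.

Lemma push_reduced j (l : L j) r : agood l -> reduced rQ rG r -> reduced rQ rG (push l r).
Proof.
case: l => [a|[q g]] /= ha.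
  case: r => [|[b|bb] r] /=.
  - move=> _; case: eqP => [_|na]; first exact: reduced_nil.
    by apply/reduced_consP; split => //; exact: reduced_nil.
  - move/reduced_consP => [[hb nb] hr hh].
    case: eqP => [_|nab] //.
    apply/reduced_consP; split => //; split => //; exact: groupM.
  - move=> hr; case: eqP => [_|na] //.
    by apply/reduced_consP; split => //=.
case: r => [|[b|[q' g']] r] /=.
- move=> _; case: eqP => [_|na]; first exact: reduced_nil.
  by apply/reduced_consP; split => //; exact: reduced_nil.
- move=> hr; case: eqP => [_|na] //.
  by apply/reduced_consP; split => //=.
- move/reduced_consP => [hb hr hh].
  case: eqP => [_|nab] //.
  by apply/reduced_consP; split.
Qed.

Lemma norm_reduced j (u : seq (L j)) : all (@agood j) u -> reduced rQ rG (norm u).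
Proof.
elim: u => [|l u IH] /=; first by move=> _; exact: reduced_nil.
by case/andP => hl hu; apply: push_reduced => //; apply: IH.
Qed.

Lemma lenB_push j (l : L j) r : (lenB (push l r) <= lenB r + ~~ is_inl l)%N.
Proof.
rewrite /lenB; case: l => [a|[q g]].
  case: r => [|[b|bb] r] /=; rewrite ?addn0.
  - by case: eqP.
  - by case: eqP.
  - by case: eqP.
case: r => [|[b|[q' g']] r] /=.
- by case: eqP.
- by case: eqP => _ /=; rewrite ?add0n ?add1n ?addn1 // leqW.
- by case: (_ == _) => /=; rewrite ?add0n ?add1n ?addn1 // ?leqW // leqnSn.
Qed.

Lemma lenB_norm j (u : seq (L j)) : (lenB (norm u) <= lenB u)%N.
Proof.
elim: u => [|l u IH] //=.
apply: leq_trans (lenB_push _ _) _.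
by rewrite /lenB /= addnC leq_add2l.
Qed.

Lemma norm_allB j (u : seq (L j)) : all (fun l => ~~ is_inl l) u ->
  all (fun l => ~~ is_inl l) (norm u) && (size (norm u) <= 1)%N.
Proof.
elim: u => [|l u IH] //=.
case/andP => hl /IH /andP[hn hs].
case: l hl => [a|[q g]] //= _.
move: hn hs; case: (norm u) => [|[b|[q' g']] [|l' r]] //=.
- by move=> _ _; case: eqP.
- by move=> _ _; case: eqP.
Qed.

End Red.



Section Count.
Variable X : nat -> finType.
Variable o : forall n, X n.
Variables Q G : groupType.
Variable rQ : forall n, Q -> {perm X n}.
Variable rG : forall n, G -> {perm X n}.
Variables alpha beta : forall i, X i.
Local Notation L j := (letter X Q G j).
Local Notation sec := (sec o rQ rG alpha beta).
Local Notation secit := (secit o rQ rG alpha beta).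

Fixpoint taus j (w : seq (L j)) : seq {perm X j} :=
  if w is l :: w' then (if l is inr _ then sig w' :: taus w' else taus w') else [::].

Lemma size_taus j (w : seq (L j)) : size (taus w) = lenB w.
Proof. by elim: w => //= [[a|b]] w IH //=; rewrite IH. Qed.

Lemma lenB_cat j (u v : seq (L j)) : lenB (u ++ v) = lenB u + lenB v.
Proof. exact: count_cat. Qed.

Lemma lenB_sec j (w : seq (L j)) y :
  lenB (sec w y) = count (fun t : {perm X j} => t y == o j) (taus w).
Proof.
elim: w => //= l w IH; rewrite lenB_cat IH.
case: l => [a|[q g]] //=.
case: (sig w y == o j) => //=.
by case: (_ == alpha j); case: (_ == beta j).
Qed.

Lemma lenB_secit j (w : seq (L j)) k y :
  lenB (secit w k y) = \sum_(i < k) count (fun t : {perm X j} => t (iter i (sig w) y) == o j) (taus w).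
Proof.
elim: k => [|k IH] /=; first by rewrite big_ord0.
by rewrite lenB_cat IH big_ord_recr /= lenB_sec addnC.
Qed.

Definition allB j (u : seq (L j)) := all (fun l => ~~ is_inl l) u.

Lemma allB_sec j (w : seq (L j)) y :
  all (fun t : {perm X j} => (t y != alpha j) && (t y != beta j)) (taus w) -> allB (sec w y).
Proof.
rewrite /allB; elim: w => //= l w IH; rewrite all_cat.
case: l => [a|[q g]] /=; first by move/IH.
case/andP => /andP[ha hb] /IH ->.
by rewrite (negbTE ha) (negbTE hb); case: (_ == o j).
Qed.

Lemma allB_secit j (w : seq (L j)) k y :
  (forall i, (i < k)%N -> all (fun t : {perm X j} => (t (iter i (sig w) y) != alpha j) &&
                                  (t (iter i (sig w) y) != beta j)) (taus w)) ->
  allB (secit w k y).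
Proof.
elim: k => //= k IH h; rewrite /allB all_cat.
apply/andP; split; first by apply: allB_sec; apply: h.
by apply: IH => i hi; apply: h; apply: ltnW.
Qed.

Lemma sum_count_swap (T : finType) (ts : seq {perm T}) k (f : nat -> T) z :
  \sum_(i < k) count (fun t : {perm T} => t (f i) == z) ts =
  \sum_(t <- ts) \sum_(i < k) (t (f i) == z : nat).
Proof.
elim: ts => [|t ts IH] /=; first by rewrite big_nil big1.
by rewrite big_cons -IH -big_split.
Qed.

Lemma sum_iter_count (T : finType) (f : T -> T) x z n :
  \sum_(i < n) (iter i f x == z : nat) = count_mem z (traject f x n).
Proof.
elim: n => [|n IH]; first by rewrite big_ord0.
by rewrite big_ord_recr IH trajectSr -cats1 count_cat /= addn0 eq_sym.
Qed.

Lemma orbit_hits (T : finType) (s : {perm T}) x z :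
  (\sum_(i < fingraph.order s x) (iter i s x == z : nat) = fconnect s x z)%N.
Proof.
by rewrite sum_iter_count count_uniq_mem ?orbit_uniq // fconnect_orbit.
Qed.

Lemma perm_eq_inv (T : finType) (t : {perm T}) y z : (t y == z) = (y == (t^-1)%g z).
Proof.
by apply/eqP/eqP => [<-|->]; rewrite ?permK ?permKV.
Qed.

Lemma order_le_ord (T : finType) (s : {perm T}) z : (fingraph.order s z <= #[s]%g)%N.
Proof.
have lp : looping s z #[s]%g.
  rewrite /looping -permX expg_order perm1 -(prednK (order_gt0 s)) /=.
  exact: mem_head.
rewrite /fingraph.order -(size_traject s z #[s]%g).
apply: leq_trans (card_size _); apply: subset_leq_card; apply/subsetP => y.
rewrite inE => /iter_findex <-.
exact: (loopingP lp).
Qed.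

End Count.



Section Main.
Variable X : nat -> finType.
Variable o : forall n, X n.
Variables Q G : groupType.
Variable rQ : forall n, Q -> {perm X n}.
Variable rG : forall n, G -> {perm X n}.
Local Notation L j := (letter X Q G j).

Lemma rQ_in n q : rQ n q \in Agrp rQ rG n.
Proof. by apply: mem_gen; rewrite in_setU; apply/orP; left; rewrite inE; apply/asboolP; exists q. Qed.
Lemma rG_in n g : rG n g \in Agrp rQ rG n.
Proof. by apply: mem_gen; rewrite in_setU; apply/orP; right; rewrite inE; apply/asboolP; exists g. Qed.

Lemma agood_secit alpha beta j (w : seq (L j)) k y :
  all (@agood X Q G rQ rG j.+1) (secit o rQ rG alpha beta w k y).
Proof.
elim: k => //= k IH; rewrite all_cat IH andbT.
move: (iter k (sig w) y) => z {IH}; elim: w z => //= l w IHw z; rewrite all_cat IHw andbT.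
case: l => [a|[q g]] //=.
case: (_ == o j) => //=; rewrite all_cat.
by case: (_ == alpha j); case: (_ == beta j) => //=; rewrite ?rQ_in ?rG_in.
Qed.

Lemma sig_in j (w : seq (L j)) : reduced rQ rG w -> sig w \in Agrp rQ rG j.
Proof.
elim: w => [|l w IH] /=; first by rewrite group1.
case/reduced_consP => hl hr _; rewrite groupM ?IH //.
by case: l hl => [a [ha _]|b _] //=; rewrite group1.
Qed.

Section W.
Variables (j : nat) (w : seq (L j)).
Let sg := sig w.
Let ts := taus w.
Let z0 := ((head 1%g ts)^-1)%g (o j).
Let O := [set y | fconnect sg z0 y].
Let T := [set t | t \in ts].
Definition Pset := [set (p.1 : {perm X j}) p.2 | p in setX T O].

Lemma card_Pset : (#|Pset| <= lenB w * #[sg]%g)%N.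
Proof.
apply: leq_trans (leq_imset_card _ _) _.
rewrite cardsX; apply: leq_mul.
  by rewrite cardsE -size_taus; apply: card_size.
by rewrite cardsE; apply: order_le_ord.
Qed.

Lemma main_cases alpha beta x :
  (0 < lenB w)%N -> alpha j \notin Pset -> beta j \notin Pset ->
  let u := secit o rQ rG alpha beta w (fingraph.order sg x) x in
  (lenB u < lenB w)%N \/ allB u.
Proof.
move=> hpos hs ht u.
case: (boolP (fconnect sg x z0)) => hc.
  right; apply: allB_secit => i hi; apply/allP => t htin.
  have hP : t (iter i (sig w) x) \in Pset.
    apply/imsetP; exists (t, iter i (sig w) x) => //.
    rewrite in_setX !inE htin /=.
    apply: connect_trans (fconnect_iter _ _ _).
    by rewrite (fconnect_sym (@perm_inj _ _)).
  by apply/andP; split; apply/eqP => e; [move: hs | move: ht]; rewrite -e hP.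
left; rewrite /u lenB_secit sum_count_swap -size_taus.
move: hc hpos; rewrite -size_taus /z0 /ts; case: (taus w) => [|t0 ts'] //= hc _.
rewrite big_cons.
rewrite (eq_bigr (fun i : 'I__ => (iter i (sig w) x == (t0^-1)%g (o j) : nat))); last first.
  by move=> i _; rewrite perm_eq_inv.
rewrite orbit_hits (negbTE hc) add0n ltnS.
rewrite -sum1_size; apply: leq_sum => t _.
rewrite (eq_bigr (fun i : 'I__ => (iter i (sig w) x == (t^-1)%g (o j) : nat))); last first.
  by move=> i _; rewrite perm_eq_inv.
by rewrite orbit_hits leq_b1.
Qed.

End W.
End Main.


Unset Implicit Arguments. Set Strict Implicit. Set Printing Implicit Defensive.


Lemma lex_le_fst (p q : nat * nat) : lex_le p q -> (p.1 <= q.1)%N.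
Proof. by case: p => p1 p2; case: q => q1 q2; rewrite /lex_le /lex_lt /= => -[[-> _]|[h|[-> _]]] //; lia. Qed.

Lemma lex_contra (p : nat * nat) b : lex_lt (1, 0)%N p -> lex_le p (b, 0%N) -> (b <= 1)%N -> False.
Proof.
case: p => p1 p2; rewrite /lex_le /lex_lt /= => -[h|[h h']] [[e1 e2]|[h2|[h2 h3]]]; lia.
Qed.

Theorem lemma2p6
  (X : nat -> finType) (o : forall n, X n) (Q G : groupType)
  (rQ : forall n, Q -> {perm X n}) (rG : forall n, G -> {perm X n})
  (Y Y' : forall i, {set X i})
  (* |X_n| >= 2 *)
  (hX : forall n, (1 < #|X n|)%N)
  (* rQ, rG are (left) group actions *)
  (hrQ : forall n (q q' : Q) (x : X n), rQ n (q * q')%g x = rQ n q (rQ n q' x))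
  (hrG : forall n (g g' : G) (x : X n), rG n (g * g')%g x = rG n g (rG n g' x))
  (* (A1) *)
  (A1 : fin_generated G /\ fin_generated Q)
  (* (A2) *)
  (A2 : perfect_group Q)
  (* (A3) *)
  (A3t : forall n, [transitive Agrp rQ rG n, on [set: X n] | 'P])
  (A3g : forall n, Agrp rQ rG n = <<\bigcup_(g in Gimg rG n) (Qimg rQ n :^ g)>>%g)
  (* Y_i, Y'_i non-empty disjoint subsets of X_i \ {o} *)
  (hY : forall i, Y i != set0) (hY' : forall i, Y' i != set0)
  (hYo : forall i, o i \notin Y i) (hY'o : forall i, o i \notin Y' i)
  (hYY' : forall i, [disjoint Y i & Y' i])
  (j : nat) (w : seq (@letter X Q G j))
  (hw : reduced rQ rG w)
  (hlen : lex_lt (1, 0)%N (len w)) :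
  (#|Zset o rQ rG Y Y' w| <= lenB w * mA rQ rG j * (#|Y j| + #|Y' j|))%N.
Proof.
have hpos : (0 < lenB w)%N.
  by move: hlen; rewrite /lex_lt /len /= => -[h|[h _]]; lia.
set P := Pset o w.
have key : forall st, st \in Zset o rQ rG Y Y' w -> (st.1 \in P) || (st.2 \in P).
  move=> [s t]; rewrite inE /= => /andP[/andP[hs ht] /asboolP [x [alpha [beta [hA hB ea eb hZ]]]]].
  apply/negPn/negP; rewrite negb_or => /andP[ns nt].
  have hab : forall i, alpha i != beta i.
    move=> i; apply/eqP => e; have := hA i; have := hB i; rewrite -e => hb ha.
    by rewrite (disjointFr (hYY' i) ha) in hb.
  rewrite -ea in ns; rewrite -eb in nt.
  have hcases := main_cases rQ rG x hpos ns nt.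
  set u := secit o rQ rG alpha beta w _ x in hcases.
  set r := norm u.
  have hr : reduced rQ rG r by apply: norm_reduced; apply: agood_secit.
  have he : f_eval o rQ rG alpha beta r =1 stab_section (f_eval o rQ rG alpha beta w) x.
    by move=> v; rewrite norm_eval // stab_fe.
  have hBr : (lenB r <= lenB u)%N by apply: lenB_norm.
  move: hZ; rewrite /Zcond; case: ifP => h1.
    case=> p [[_ hmin] hp1]; have := lex_le_fst _ _ (hmin r hr he); rewrite hp1 /=.
    case: hcases => [hlt|hall]; first by lia.
    have /andP[_ hsz] := norm_allB hall.
    have hb : (lenB r <= size r)%N by apply: count_size.
    have hsz2 : (size r <= 1)%N := hsz.
    move: h1; lia.
  case: eqP => // h1' [p [[_ hmin] hp]].
  have := hmin r hr he; rewrite /len.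
  case: hcases => [hlt|hall].
    move/lex_le_fst => /= hp'; move: hp; rewrite /lex_lt /=; lia.
  have /andP[hallr hsz] := norm_allB hall.
  have hA0 : lenA r = 0%N.
    by apply/eqP; rewrite -leqn0 leqNgt -has_count -all_predC.
  rewrite hA0 => hle; apply: (lex_contra _ _ hp hle).
  have hb : (lenB r <= size r)%N by apply: count_size.
  have hsz2 : (size r <= 1)%N := hsz.
  lia.
have hsub : Zset o rQ rG Y Y' w \subset setX P (Y' j) :|: setX (Y j) P.
  apply/subsetP => -[s t] hst; have := key _ hst.
  move: hst; rewrite inE => /andP[/andP[hs ht] _].
  by case/orP => h; rewrite in_setU !in_setX ?h ?hs ?ht ?orbT.
apply: leq_trans (subset_leq_card hsub) _.
apply: leq_trans (leq_card_setU _ _) _.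
rewrite !cardsX.
have hP : (#|P| <= lenB w * mA rQ rG j)%N.
  apply: leq_trans (card_Pset o w) _; rewrite leq_mul2l; apply/orP; right.
  by rewrite /mA; apply: leq_bigmax_cond; apply: sig_in hw.
rewrite [(#|Y j| * _)%N]mulnC -mulnDr addnC.
by apply: leq_mul.
Qed.
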